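(* For $n\ge2$, the DFA $\mathcal W_n$ defined below is minimal, accepts a two-sided ideal, and its transition semigroup has size $n^{n-2}+(n-2)2^{n-2}+1$.
   Context: $Q_n=\{0,\dots,n-1\}$. Notation: $(p\to q)$ maps $p$ to $q$ and fixes other states; $(p_0,\dots,p_{k-1})$ is the cyclic permutation $p_0\mapsto\cdots\mapsto p_{k-1}\mapsto p_0$ fixing other states; $\mathbf 1$ is the identity; $(1\to2)(0\to1)$ is the map $0\mapsto1,1\mapsto2,2\mapsto2$. For $n\ge4$, $\mathcal W_n$ has states $Q_n$, initial $0$, final $\{n-1\}$, alphabet $\{a,b,c,d,e,f\}$, where $a\colon(1,2,\dots,n-2)$, $b\colon(1,2)$, $c\colon(n-2\to1)$, $d\colon(n-2\to0)$, $e$ maps each state of $\{0,\dots,n-2\}$ to $1$ and fixes $n-1$, and $f\colon(1\to n-1)$ (for $n=4$, $a$ and $b$ coincide). $\mathcal W_3$ has states $Q_3$, initial $0$, final $\{2\}$, alphabet $\{a,b,c\}$, $a\colon(1\to2)(0\to1)$, $b\colon(1\to0)$, $c\colon\mathbf 1$. $\mathcal W_2$ has states $Q_2$, initial $0$, final $\{1\}$, alphabet $\{a,b\}$, $a\colon(0\to1)$, $b\colon\mathbf 1$. A two-sided ideal is a nonempty $L$ with $L=\Sigma^*L\Sigma^*$. The transition semigroup is the set of state transformations induced by nonempty words. *)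

(* Defs.v *)
From mathcomp Require Import all_boot.
From mathcomp Require Import boolp.
Set Implicit Arguments. Unset Strict Implicit. Unset Printing Implicit Defensive.

Record dfa (Sigma : Type) := DFA {
  dsize : nat;
  dtrans : 'I_dsize -> Sigma -> 'I_dsize;
  dinit : 'I_dsize;
  dfinal : {set 'I_dsize} }.
Arguments dsize {Sigma} d.
Arguments dtrans {Sigma} d _ _.
Arguments dinit {Sigma} d.
Arguments dfinal {Sigma} d.

Definition drun (Sigma : Type) (A : dfa Sigma) (q : 'I_(dsize A)) (w : seq Sigma)
  : 'I_(dsize A) := foldl (dtrans A) q w.

Definition accepts (Sigma : Type) (A : dfa Sigma) (w : seq Sigma) : bool :=
  @drun Sigma A (dinit A) w \in dfinal A.

Definition minimal (Sigma : Type) (A : dfa Sigma) : Prop :=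
  forall B : dfa Sigma, (forall w, accepts B w = accepts A w) -> dsize A <= dsize B.

Definition two_sided_ideal (Sigma : Type) (L : seq Sigma -> bool) : Prop :=
  (exists w, L w) /\
  forall w, L w <-> exists u x v, w = u ++ x ++ v /\ L x.

Definition trans_semigroup (Sigma : Type) (A : dfa Sigma)
  : {set {ffun 'I_(dsize A) -> 'I_(dsize A)}} :=
  [set f : {ffun 'I_(dsize A) -> 'I_(dsize A)} |
     `[< exists w : seq Sigma, w <> [::] /\ forall q, f q = @drun Sigma A q w >]].

Definition W_letters (n : nat) : nat :=
  if 4 <= n then 6 else if n == 3 then 3 else 2.

(* action of letter l on state x (as natural numbers).
   n >= 4: letters 0..5 are a,b,c,d,e,f;
   n = 3: letters 0..2 are a,b,c;  n = 2: letters 0..1 are a,b. *)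
Definition W_act (n l x : nat) : nat :=
  if 4 <= n then
    match l with
    | 0 => if (1 <= x) && (x <= n - 3) then x.+1
           else if x == n - 2 then 1 else x          (* a : (1,2,...,n-2) *)
    | 1 => if x == 1 then 2 else if x == 2 then 1 else x
    | 2 => if x == n - 2 then 1 else x
    | 3 => if x == n - 2 then 0 else x
    | 4 => if x <= n - 2 then 1 else x
    | _ => if x == 1 then n - 1 else x
    end
  else if n == 3 then
    match l with
    | 0 => if x == 0 then 1 else if x == 1 then 2 else x
    | 1 => if x == 1 then 0 else x
    | _ => x
    end
  else
    match l with
    | 0 => if x == 0 then 1 else x
    | _ => x
    end.

(* States are 'I_(n.-2.+2), which is 'I_n for n >= 2 (the only case used). *)
Definition W (n : nat) : dfa 'I_(W_letters n) :=
  @DFA 'I_(W_letters n) n.-2.+2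
    (fun q l => inord (W_act n l q))
    ord0
    [set ord_max].

(* Main.v *)
Require Import Defs.
From mathcomp Require Import all_boot zify boolp.
Set Implicit Arguments. Unset Strict Implicit. Unset Printing Implicit Defensive.


Ltac crush := rewrite /W_act /=; repeat (case: ifP => /=); move=> *; lia.

Lemma act_lt n l x : 2 <= n -> x < n -> W_act n l x < n.
Proof.
move=> h2 hx; rewrite /W_act.
case: ifP => H4; [case: l => [|[|[|[|[|l]]]]]| case: ifP => H3; [case: l => [|[|l]]|case: l => [|l]]];
 repeat (let H := fresh "H" in simpl; case: ifP => H); simpl; lia.
Qed.

Lemma act_top m l : W_act m.+2 l m.+1 = m.+1.
Proof.
rewrite /W_act.
case: ifP => H4; [case: l => [|[|[|[|[|l]]]]]| case: ifP => H3; [case: l => [|[|l]]|case: l => [|l]]];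
 repeat (let H := fresh "H" in simpl; case: ifP => H); simpl; lia.
Qed.

Lemma act_kind m l : W_act m.+2 l 0 = 0 \/
  forall y, y < m.+2 -> W_act m.+2 l y = W_act m.+2 l 0 \/ W_act m.+2 l y = m.+1.
Proof.
rewrite /W_act.
case: ifP => H4; [case: l => [|[|[|[|[|l]]]]]| case: ifP => H3; [case: l => [|[|l]]|case: l => [|l]]];
 try (left; repeat (let H := fresh "H" in simpl; case: ifP => H); simpl; lia);
 right => y hy; repeat (let H := fresh "H" in simpl; case: ifP => H); simpl; lia.
Qed.

Definition drn m (w : seq nat) x := foldl (fun x l => W_act m.+2 l x) x w.

Lemma drn_cat m w1 w2 x : drn m (w1 ++ w2) x = drn m w2 (drn m w1 x).
Proof. by rewrite /drn foldl_cat. Qed.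

Lemma drn_rcons m w l x : drn m (rcons w l) x = W_act m.+2 l (drn m w x).
Proof. by rewrite -cats1 drn_cat. Qed.

Lemma drn_lt m w x : x < m.+2 -> drn m w x < m.+2.
Proof.
elim/last_ind: w => [//|w l IH] hx; rewrite drn_rcons; apply: act_lt => //; exact: IH.
Qed.

Definition inS m (t : nat -> nat) : Prop :=
  (forall x, x < m.+2 -> t x < m.+2) /\
  ((t 0 = 0 /\ t m.+1 = m.+1) \/
   (exists p, 1 <= p <= m /\ t 0 = p /\ t m.+1 = m.+1 /\
        forall x, 1 <= x <= m -> t x = p \/ t x = m.+1) \/
   (forall x, x < m.+2 -> t x = m.+1)).

Lemma inS_collapse m t : (forall x, x < m.+2 -> t x < m.+2) -> t m.+1 = m.+1 ->
  (forall x, 1 <= x <= m -> t x = t 0 \/ t x = m.+1) -> inS m t.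
Proof.
move=> hlt htop hx; split => //.
have := hlt 0 isT.
case: (t 0 =P 0) => [->|h0] h2; first by left; split.
case: (t 0 =P m.+1) => [h1|h1].
  right; right => x lx.
  case: (x =P 0) => [->//|nx]; case: (x =P m.+1) => [->//|nx'].
  have [] := hx x ltac:(lia); lia.
right; left; exists (t 0); split; first lia.
by split => //; split.
Qed.

Lemma inS_step m t l : inS m t -> inS m (fun x => W_act m.+2 l (t x)).
Proof.
case=> hlt hc.
have htop : t m.+1 = m.+1.
  case: hc => [[]//|[[p [_ [_ []]]]//|h]]; exact: h.
have hlt' : forall x, x < m.+2 -> W_act m.+2 l (t x) < m.+2.
  by move=> x hx; apply: act_lt => //; apply: hlt.
case: (act_kind m l) => hk.
  case: hc => [[h0 h1]|hc].
    by split=> //; left; rewrite h0 hk h1 act_top.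
  apply: inS_collapse => //; first by rewrite htop act_top.
  move=> x hx; case: hc => [[p [hp [h0 [h1 h2]]]]|h3].
    by case: (h2 x hx) => ->; [left; rewrite h0| right; rewrite act_top].
  by right; rewrite h3 ?act_top //; lia.
apply: inS_collapse => //; first by rewrite htop act_top.
move=> x hx; case: hc => [[h0 h1]|[[p [hp [h0 [h1 h2]]]]|h3]].
- by rewrite h0; apply: hk; apply: hlt; lia.
- by case: (h2 x hx) => ->; [left; rewrite h0| right; rewrite act_top].
- by right; rewrite h3 ?act_top //; lia.
Qed.

Lemma inS_ext m t t' : (forall x, x < m.+2 -> t x = t' x) -> inS m t -> inS m t'.
Proof.
move=> e [h1 h2]; split; first by move=> x hx; rewrite -e // h1.
rewrite -!e //.
case: h2 => [|[[p [hp [h0 [h3 h4]]]]|h]]; [by left|right; left|right; right].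
  exists p; do 3!split => //; move=> x hx; rewrite -e; [exact: h4|lia].
by move=> x hx; rewrite -e // h.
Qed.

Lemma inS_drn m w : inS m (drn m w).
Proof.
elim/last_ind: w => [|w l IH].
  by split => //; left.
apply: inS_ext (inS_step l IH) => x _; by rewrite drn_rcons.
Qed.


Definition Gn m (f : nat -> nat) := exists w : seq nat, w != [::] /\
  all (fun l => l < W_letters m.+2) w /\ forall x, x < m.+2 -> f x = drn m w x.

Lemma Gn_lt m f x : Gn m f -> x < m.+2 -> f x < m.+2.
Proof. by case=> w [_ [_ h]] hx; rewrite h //; apply: drn_lt. Qed.

Lemma Gn_ext m f g : Gn m f -> (forall x, x < m.+2 -> f x = g x) -> Gn m g.
Proof. case=> w [h1 [h2 h3]] e; exists w; do 2!split => //; move=> x hx; by rewrite -e // h3. Qed.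

Lemma Gn_comp m f g : Gn m f -> Gn m g -> Gn m (fun x => g (f x)).
Proof.
move=> hf; have hl := Gn_lt hf; case: hf => w1 [h1 [h2 h3]] [w2 [k1 [k2 k3]]].
exists (w1 ++ w2); split; first by move: h1; case: w1 {h2 h3}.
split; first by rewrite all_cat h2 k2.
by move=> x hx; rewrite drn_cat -h3 // k3 // hl.
Qed.

Lemma Gn_letter m l : l < W_letters m.+2 -> Gn m (W_act m.+2 l).
Proof. by move=> hl; exists [:: l]; rewrite /= hl. Qed.

Definition sw (x y z : nat) : nat := if z == x then y else if z == y then x else z.
Definition mp (x y z : nat) : nat := if z == x then y else z.

Ltac ncase := repeat (simpl; match goal with |- context [if ?b then _ else _] =>
  lazymatch b with context [if _ then _ else _] => fail | _ =>
  let H := fresh "H" in case: (boolP b) => H end end); simpl; try lia.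

Lemma count_lt (a b : pred nat) s : (forall z, b z -> a z) ->
  (exists2 z, z \in s & a z && ~~ b z) -> count b s < count a s.
Proof.
move=> hab; elim: s => [[z]//|u s IH [z]]; rewrite inE /= => /orP[/eqP->|hz] hz'.
  case/andP: hz' => -> /negbTE ->; rewrite add1n add0n ltnS; exact: sub_count.
have := IH (ex_intro2 _ _ z hz hz').
case hbu: (b u); first by rewrite (hab _ hbu) ltn_add2l.
by case: (a u) => /=; lia.
Qed.

Lemma gen_class1 m : Gn m id ->
  (forall x y, 1 <= x <= m -> y < m.+2 -> Gn m (mp x y)) ->
  (forall x y, 1 <= x <= m -> 1 <= y <= m -> Gn m (sw x y)) ->
  forall t, (forall x, x < m.+2 -> t x < m.+2) -> t 0 = 0 -> t m.+1 = m.+1 -> Gn m t.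
Proof.
move=> hid hmp hsw t.
move: {2}(count (fun x => t x != x) (iota 1 m)) (leqnn (count (fun x => t x != x) (iota 1 m))) => k.
elim: k t => [|k IH] t hk hlt h0 h1.
  apply: (@Gn_ext m id t hid) => x hx /=.
  case: (x =P 0) => [->//|n0]; case: (x =P m.+1) => [->//|n1].
  have : x \in iota 1 m by rewrite mem_iota; lia.
  have : ~~ has (fun x => t x != x) (iota 1 m) by rewrite has_count -leqNgt.
  by move/hasPn => H /H /negbNE /eqP.
case: (boolP (has (fun x => t x != x) (iota 1 m))) => hh; last first.
  apply: (IH t) => //; move: hh; rewrite has_count; lia.
case/hasP: hh => x; rewrite mem_iota => hx htx.
set y := t x.
have hy : y < m.+2 by apply: hlt; lia.
have [hfix|hnfix] : (y = 0 \/ y = m.+1 \/ t y = y) \/ (1 <= y <= m /\ t y != y).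
- case: (y =P 0); first by left; left.
  case: (y =P m.+1); first by left; right; left.
  case: (t y =P y); first by left; right; right.
  by move=> /eqP ? ? ?; right; split => //; lia.
- pose t' z := if z == x then x else t z.
  have ht : forall z, z < m.+2 -> t' (mp x y z) = t z.
    move=> z _; rewrite /t' /mp; case: (z =P x) => [->|nz]; last by case: ifP => // /eqP.
    have -> : (y == x) = false by apply/eqP => e; move: htx; rewrite -/y e eqxx.
    by case: hfix => [e|[e|//]]; rewrite e ?h0 ?h1.
  suff G' : Gn m t' by exact: Gn_ext (Gn_comp (hmp x y ltac:(lia) hy) G') ht.
  apply: IH.
  + rewrite -ltnS; apply: leq_trans hk; apply: count_lt.
      by move=> z; rewrite /t'; case: ifP => // /eqP ->; rewrite eqxx.
    by exists x; rewrite ?mem_iota ?htx /t' ?eqxx //; lia.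
  + by move=> z hz; rewrite /t'; case: ifP => // _; [lia|apply: hlt].
  + by rewrite /t'; case: ifP => //; lia.
  + by rewrite /t'; case: ifP => //; lia.
- case: hnfix => hym hty.
  pose t' z := t (sw x y z).
  have ht : forall z, z < m.+2 -> t' (sw x y z) = t z.
    move=> z _; rewrite /t' /sw; congr (t _).
    by ncase.
  suff G' : Gn m t' by exact: Gn_ext (Gn_comp (hsw x y ltac:(lia) hym) G') ht.
  apply: IH.
  + rewrite -ltnS; apply: leq_trans hk; apply: count_lt.
      move=> z; rewrite /t' /sw; case: (z =P x) => [->|_]; first by rewrite htx.
      by case: (z =P y) => [->|//]; rewrite -/y eqxx.
    exists y; rewrite ?mem_iota ?hty /t' /sw ?eqxx; try lia.
    by case: ifP => [/eqP e|_]; [move: htx; rewrite -/y -e eqxx|rewrite -/y eqxx].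
  + by move=> z hz; rewrite /t' /sw; apply: hlt; repeat case: ifP => //; lia.
  + by rewrite /t' /sw; repeat case: ifP; lia.
  + by rewrite /t' /sw; repeat case: ifP; lia.
Qed.


Lemma gen_all m : Gn m id ->
  (forall x y, 1 <= x <= m -> y < m.+2 -> Gn m (mp x y)) ->
  (forall x y, 1 <= x <= m -> 1 <= y <= m -> Gn m (sw x y)) ->
  (1 <= m -> Gn m (fun z => if z <= m then 1 else z)) ->
  (m = 0 -> Gn m (fun _ => m.+1)) ->
  forall t, inS m t -> Gn m t.
Proof.
move=> hid hmp hsw hE hK t [hlt hc].
have C1 := gen_class1 hid hmp hsw.
have hK' : Gn m (fun _ => m.+1).
  case: m hid hmp hsw hE hK hlt hc C1 => [|m] hid hmp hsw hE hK hlt hc C1; first exact: hK.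
  pose u z := if (1 <= z <= m.+1) then m.+2 else z.
  have Gu : Gn m.+1 u by apply: C1; rewrite /u => *; ncase.
  have G := (Gn_comp (Gn_comp Gu (hE isT)) (hmp 1 m.+2 isT (ltnSn _))).
  apply: (Gn_ext G) => z hz; rewrite /u /mp; ncase.
case: hc => [[h0 h1]|[[p [hp [h0 [h1 h2]]]]|h3]].
- exact: C1.
- pose u z := if (1 <= z <= m) && (t z == m.+1) then m.+1 else z.
  have Gu : Gn m u by apply: C1; rewrite /u => *; ncase.
  have G := (Gn_comp (Gn_comp Gu (hE ltac:(lia))) (hsw 1 p ltac:(lia) hp)).
  apply: (Gn_ext G) => z hz; rewrite /u /sw.
  case: (z =P 0) => [->|n0]; first by rewrite h0; ncase.
  case: (z =P m.+1) => [->|n1]; first by rewrite h1; ncase.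
  by case: (h2 z ltac:(lia)) => ->; ncase.
- by apply: (Gn_ext hK') => z hz; rewrite h3.
Qed.



Definition Af (m : nat) z := if (1 <= z) && (z < m) then z.+1 else if z == m then 1 else z.

Lemma letters_lt (m : nat) (hm : 2 <= m) l : l < 6 -> l < W_letters m.+2.
Proof. by rewrite /W_letters; ncase. Qed.

Lemma Ga (m : nat) (hm : 2 <= m) : Gn m (Af m).
Proof.
apply: (Gn_ext (Gn_letter (@letters_lt m hm 0 isT))) => z hz; rewrite /W_act /Af; ncase.
Qed.
Lemma Gb (m : nat) (hm : 2 <= m) : Gn m (sw 1 2).
Proof.
apply: (Gn_ext (Gn_letter (@letters_lt m hm 1 isT))) => z hz; rewrite /W_act /sw; ncase.
Qed.
Lemma Gc (m : nat) (hm : 2 <= m) : Gn m (mp m 1).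
Proof.
apply: (Gn_ext (Gn_letter (@letters_lt m hm 2 isT))) => z hz; rewrite /W_act /mp; ncase.
Qed.
Lemma Gd (m : nat) (hm : 2 <= m) : Gn m (mp m 0).
Proof.
apply: (Gn_ext (Gn_letter (@letters_lt m hm 3 isT))) => z hz; rewrite /W_act /mp; ncase.
Qed.
Lemma Ge (m : nat) (hm : 2 <= m) : Gn m (fun z => if z <= m then 1 else z).
Proof.
apply: (Gn_ext (Gn_letter (@letters_lt m hm 4 isT))) => z hz; rewrite /W_act; ncase.
Qed.
Lemma Gf (m : nat) (hm : 2 <= m) : Gn m (mp 1 m.+1).
Proof.
apply: (Gn_ext (Gn_letter (@letters_lt m hm 5 isT))) => z hz; rewrite /W_act /mp; ncase.
Qed.

Lemma Gid (m : nat) (hm : 2 <= m) : Gn m id.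
Proof. apply: (Gn_ext (Gn_comp (Gb hm) (Gb hm))) => z hz; rewrite /sw; ncase. Qed.

Lemma drn_apow (m : nat) (hm : 2 <= m) k z : k <= m -> z < m.+2 ->
  drn m (nseq k 0) z = if (1 <= z <= m) then (if z + k <= m then z + k else z + k - m) else z.
Proof.
elim: k z => [|k IH] z hk hz; first by rewrite /=; ncase.
rewrite /drn /= -/(drn m (nseq k 0) _) IH; last 2 first.
- lia.
- by apply: act_lt.
rewrite /W_act; ncase.
Qed.

Definition Ainv (m : nat) z := if z == 1 then m else if (2 <= z <= m) then z.-1 else z.

Lemma GAinv (m : nat) (hm : 2 <= m) : Gn m (Ainv m).
Proof.
exists (nseq m.-1 0); split; first by case: m hm => [|[|k]].
split; first by apply/allP => l; rewrite mem_nseq => /andP[_ /eqP ->]; apply: (@letters_lt m hm).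
by move=> z hz; rewrite (@drn_apow m hm) //; [rewrite /Ainv; ncase|lia].
Qed.

Lemma Gconj (m : nat) a b g : Gn m g -> Gn m (sw a b) -> Gn m (fun z => sw a b (g (sw a b z))).
Proof. move=> hg hs; exact: Gn_comp (Gn_comp hs hg) hs. Qed.

Lemma Gtau (m : nat) (hm : 2 <= m) i : 1 <= i < m -> Gn m (sw i i.+1).
Proof.
elim: i => [//|i IH] hi.
case: (i =P 0) => [->|ni]; first exact: (Gb hm).
have G := Gn_comp (Gn_comp (GAinv hm) (IH ltac:(lia))) (Ga hm).
apply: (Gn_ext G) => z hz; rewrite /Af /sw /Ainv; ncase.
Qed.

Lemma Gsw (m : nat) (hm : 2 <= m) x y : 1 <= x <= m -> 1 <= y <= m -> Gn m (sw x y).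
Proof.
wlog le : x y / x <= y.
  move=> W hx hy; case: (leqP x y) => h; first exact: W.
  apply: (Gn_ext (W y x ltac:(lia) hy hx)) => z _; rewrite /sw; ncase.
move=> hx hy; move: {2}(y - x) (erefl (y - x)) => d.
elim: d y le hy => [|d IH] y le hy hd.
  apply: (Gn_ext (Gid hm)) => z _; rewrite /sw; ncase.
case: (x =P y.-1) => [ex|nx].
  have G := (@Gtau m hm x) ltac:(lia).
  apply: (Gn_ext G) => z _; rewrite /sw; ncase.
have G := Gconj (IH y.-1 ltac:(lia) ltac:(lia) ltac:(lia)) ((@Gtau m hm y.-1) ltac:(lia)).
apply: (Gn_ext G) => z _; rewrite /sw; ncase.
Qed.

Lemma sw_mp a b x y z : sw a b (mp x y (sw a b z)) = mp (sw a b x) (sw a b y) z.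
Proof. rewrite /sw /mp; ncase. Qed.

Lemma Gmp (m : nat) (hm : 2 <= m) x y : 1 <= x <= m -> y < m.+2 -> Gn m (mp x y).
Proof.
move=> hx hy.
case: (y =P x) => [->|nxy].
  apply: (Gn_ext (Gid hm)) => z _; rewrite /mp; ncase.
case: (y =P 0) => [->|n0].
  have G := Gconj (Gd hm) ((@Gsw m hm m x) ltac:(lia) hx).
  apply: (Gn_ext G) => z _; rewrite sw_mp /mp /sw; ncase.
case: (y =P m.+1) => [->|n1].
  have G := Gconj (Gf hm) ((@Gsw m hm 1 x) ltac:(lia) hx).
  apply: (Gn_ext G) => z _; rewrite sw_mp /mp /sw; ncase.
case: (y =P m) => [ey|nm]; first subst y.
  have G1 := Gconj (Gc hm) ((@Gsw m hm 1 m) ltac:(lia) ltac:(lia)).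
  have G := Gconj G1 ((@Gsw m hm 1 x) ltac:(lia) hx).
  apply: (Gn_ext G) => z _; rewrite /= !sw_mp /mp /sw; ncase.
have G1 := Gconj (Gc hm) ((@Gsw m hm 1 y) ltac:(lia) ltac:(lia)).
have G := Gconj G1 ((@Gsw m hm m x) ltac:(lia) hx).
apply: (Gn_ext G) => z _; rewrite /= !sw_mp /mp /sw; ncase.
Qed.

Lemma gen_big (m : nat) (hm : 2 <= m) t : inS m t -> Gn m t.
Proof.
apply: gen_all.
- exact: (Gid hm).
- exact: (@Gmp m hm).
- exact: (@Gsw m hm).
- move=> _; exact: (Ge hm).
- lia.
Qed.


Lemma gen_m1 t : inS 1 t -> Gn 1 t.
Proof.
have L l : l < 3 -> Gn 1 (W_act 3 l) by move=> hl; apply: Gn_letter.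
have Gid : Gn 1 id by apply: (Gn_ext (L 2 isT)) => z hz; rewrite /W_act; ncase.
apply: gen_all => //.
- move=> x y hx hy.
  have -> : x = 1 by lia.
  case: y hy => [|[|[|y]]] hy //.
  + by apply: (Gn_ext (L 1 isT)) => z hz; rewrite /W_act /mp; ncase.
  + by apply: (Gn_ext Gid) => z hz; rewrite /W_act /mp; ncase.
  + by apply: (Gn_ext (Gn_comp (L 0 isT) (L 1 isT))) => z hz; rewrite /W_act /mp; ncase.
- move=> x y hx hy.
  by apply: (Gn_ext Gid) => z hz; rewrite /sw; ncase.
- move=> _; by apply: (Gn_ext (Gn_comp (L 1 isT) (L 0 isT))) => z hz; rewrite /W_act; ncase.
Qed.

Lemma gen_m0 t : inS 0 t -> Gn 0 t.
Proof.
have L l : l < 2 -> Gn 0 (W_act 2 l) by move=> hl; apply: Gn_letter.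
have Gid : Gn 0 id by apply: (Gn_ext (L 1 isT)) => z hz; rewrite /W_act; ncase.
apply: gen_all => //; try lia.
by move=> _; apply: (Gn_ext (L 0 isT)) => z hz; rewrite /W_act; ncase.
Qed.


Lemma gen m t : inS m t -> Gn m t.
Proof.
case: m t => [|[|m]] t; [exact: gen_m0|exact: gen_m1|].
by apply: gen_big.
Qed.

Lemma Gn_inS m t : Gn m t -> inS m t.
Proof. case=> w [_ [_ h]]; apply: inS_ext (inS_drn m w) => x hx; by rewrite h. Qed.

Lemma drun_val m (q : 'I_(m.+2)) (w : seq 'I_(W_letters m.+2)) :
  val (@drun _ (W m.+2) q w) = drn m (map val w) q.
Proof.
elim: w q => [//|l w IH] q /=.
rewrite /drun /= -/(drun _ _) IH /drn /=; congr foldl.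
by rewrite inordK //; apply: act_lt.
Qed.

Lemma map_pmap_insub k (w : seq nat) : all (fun l => l < k) w ->
  map val (pmap (insub : nat -> option 'I_k) w) = w.
Proof.
elim: w => [//|l w IH] /= /andP[hl hw].
by rewrite /oapp insubT /= IH.
Qed.

Lemma semiP m (f : {ffun 'I_(m.+2) -> 'I_(m.+2)}) :
  f \in trans_semigroup (W m.+2) <-> Gn m (fun x => val (f (inord x))).
Proof.
rewrite inE; split.
  move/asboolP; case=> w [hw he]; exists (map val w); split; first by move: hw; case: w {he}.
  split; first by apply/allP => l /mapP [l' _ ->]; exact: ltn_ord.
  by move=> x hx; rewrite he drun_val inordK.
case=> w [hw [ha he]].
apply/asboolP; exists (pmap insub w); split.
  by move=> e; move: (map_pmap_insub ha); rewrite e => h; move: hw; rewrite -h.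
move=> q; apply: val_inj; rewrite drun_val map_pmap_insub //.
by rewrite -he // inord_val.
Qed.


Definition famn m p v y : bool :=
  if v == 0 then y == p else if v == m.+1 then y == m.+1 else
  if p == 0 then true else if p == m.+1 then y == m.+1 else (y == p) || (y == m.+1).

Lemma inS_famn m t : (forall x, x < m.+2 -> t x < m.+2) ->
  inS m t <-> forall v, v < m.+2 -> famn m (t 0) v (t v).
Proof.
move=> hlt; split.
  case=> _ [[h0 h1]|[[p [hp [h0 [h1 h2]]]]|h3]] v hv; rewrite /famn.
  - rewrite h0; case: (v =P 0) => [->|n0]; first by rewrite h0; ncase.
    case: (v =P m.+1) => [->|n1]; first by rewrite h1; ncase.
    ncase.
  - rewrite h0; case: (v =P 0) => [->|n0]; first by rewrite h0; ncase.
    case: (v =P m.+1) => [->|n1]; first by rewrite h1; ncase.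
    have := h2 v ltac:(lia); ncase.
  - rewrite (h3 0) //; case: (v =P 0) => [->|n0]; first by rewrite h3 //; ncase.
    by rewrite h3 //; ncase.
move=> h; split => //.
have hm := h m.+1 (ltnSn _); rewrite /famn in hm.
have htop : t m.+1 = m.+1 by move: hm; ncase.
case: (t 0 =P 0) => [e0|n0]; first by left.
have ht0 := hlt 0 isT.
case: (t 0 =P m.+1) => [e1|n1].
  right; right => x hx; have := h x hx; rewrite /famn e1; ncase.
right; left; exists (t 0); split; first lia; split => //; split => //.
move=> x hx; have := h x ltac:(lia); rewrite /famn; ncase.
Qed.


Definition Fam m (p x : 'I_(m.+2)) : {set 'I_(m.+2)} :=
  if x == ord0 then [set p] else if x == ord_max then [set ord_max] else
  if p == ord0 then setT else if p == ord_max then [set ord_max] else [set p; ord_max].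

Arguments Fam : clear implicits.

Lemma Fam_famn m p x y : (y \in Fam m p x) = famn m p x y.
Proof.
rewrite /Fam /famn; rewrite -!val_eqE /=.
by repeat case: ifP => _; rewrite ?inE -?val_eqE.
Qed.

Lemma semi_fam m (f : {ffun 'I_(m.+2) -> 'I_(m.+2)}) :
  (f \in trans_semigroup (W m.+2)) = [forall x, f x \in Fam m (f ord0) x].
Proof.
have hlt : forall x, x < m.+2 -> val (f (inord x)) < m.+2 by move=> x _; exact: ltn_ord.
apply/idP/forallP.
  move/semiP/Gn_inS/(inS_famn hlt) => h x.
  have := h x (ltn_ord x); rewrite !inord_val Fam_famn.
  by have -> : inord 0 = ord0 :> 'I_(m.+2) by apply: val_inj; rewrite /= inordK.
move=> h; apply/semiP/gen/(inS_famn hlt) => v hv.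
have -> : inord 0 = ord0 :> 'I_(m.+2) by apply: val_inj; rewrite /= inordK.
by have := h (inord v); rewrite Fam_famn /= inordK.
Qed.


Lemma card_fib m (p : 'I_(m.+2)) :
  #|[pred f in trans_semigroup (W m.+2) | f ord0 == p]| = #|family (Fam m p)|.
Proof.
apply: eq_card => f; rewrite inE (semi_fam f).
apply/andP/familyP.
  by case=> /forallP h /eqP <-.
move=> h; have := h ord0; rewrite {1}/Fam eqxx inE => /eqP e; split; last by rewrite e.
by apply/forallP => x; rewrite e; exact: h.
Qed.

Lemma card_fam m (p : 'I_(m.+2)) :
  #|family (Fam m p)| = (if p == ord0 then m.+2 else if p == ord_max then 1 else 2) ^ m.
Proof.
rewrite card_family foldrE big_map big_enum /=.
rewrite big_ord_recl big_ord_recr /=.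
have -> : #|Fam m p ord0| = 1 by rewrite /Fam eqxx cards1.
have -> : #|Fam m p (lift ord0 ord_max)| = 1.
  rewrite /Fam; have -> : lift ord0 ord_max = ord_max :> 'I_(m.+2) by apply: val_inj.
  by rewrite -val_eqE /= eqxx cards1.
rewrite mul1n muln1.
rewrite (eq_bigr (fun _ => (if p == ord0 then m.+2 else if p == ord_max then 1 else 2))).
  by rewrite prod_nat_const card_ord.
move=> i _; rewrite /Fam.
have -> : (lift ord0 (widen_ord (leqnSn m) i) == ord0) = false by rewrite -val_eqE.
have -> : (lift ord0 (widen_ord (leqnSn m) i) == ord_max) = false.
  by rewrite -val_eqE /= /bump /=; have := ltn_ord i; lia.
case: ifP => _; first by rewrite cardsT card_ord.
case: ifP => hp; first by rewrite cards1.
by rewrite cards2; move: hp; rewrite -!val_eqE /= => ->.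
Qed.

Lemma card_semi m : #|trans_semigroup (W m.+2)| = (m.+2) ^ m + m * 2 ^ m + 1.
Proof.
rewrite -sum1_card (@partition_big _ _ _ _ _ _ _ (fun f : {ffun 'I_(m.+2) -> 'I_(m.+2)} => f ord0) predT) //=.
rewrite (eq_bigr (fun p => #|family (Fam m p)|)); last first.
  by move=> p _; rewrite sum1_card -card_fib.
rewrite (eq_bigr (fun p : 'I_(m.+2) => (if p == ord0 then m.+2 else if p == ord_max then 1 else 2) ^ m)); last first.
  by move=> p _; rewrite card_fam.
rewrite big_ord_recl big_ord_recr /=.
have -> : (lift ord0 ord_max == ord_max :> 'I_(m.+2)) = true by rewrite -val_eqE /= eqxx.
rewrite exp1n.
rewrite (eq_bigr (fun _ => 2 ^ m)); last first.
  move=> i _.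
  have -> : (lift ord0 (widen_ord (leqnSn m) i) == ord_max) = false.
    by rewrite -val_eqE /= /bump /=; have := ltn_ord i; lia.
  by [].
by rewrite sum_nat_const card_ord addnA.
Qed.


Lemma drun_cat (S : Type) (A : dfa S) q u v : drun (drun q u) v = @drun S A q (u ++ v).
Proof. by rewrite /drun foldl_cat. Qed.

Lemma semi_word m (f : {ffun 'I_(m.+2) -> 'I_(m.+2)}) :
  f \in trans_semigroup (W m.+2) -> exists w, forall q, f q = @drun _ (W m.+2) q w.
Proof. by rewrite inE => /asboolP [w [_ h]]; exists w. Qed.

Lemma reach_ex m (q : 'I_(m.+2)) : exists w, @drun _ (W m.+2) ord0 w == q.
Proof.
case: (q =P ord0) => [->|nq]; first by exists [::].
pose f : {ffun 'I_(m.+2) -> 'I_(m.+2)} := [ffun x => if x == ord_max then ord_max else q].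
have : f \in trans_semigroup (W m.+2).
  rewrite semi_fam; apply/forallP => x; rewrite /Fam !ffunE.
  have e0 : (ord0 == ord_max :> 'I_(m.+2)) = false by rewrite -val_eqE.
  rewrite e0; move/eqP/negbTE: nq => nq.
  case: (x =P ord0) => [->|nx0]; first by rewrite e0 inE.
  case: ifP => hx; first by rewrite inE.
  rewrite nq; case: ifP => hq; by rewrite !inE ?eqxx ?hq.
case/semi_word => w h; exists w; by rewrite -h ffunE -val_eqE.
Qed.

Lemma dist_ex m (p q : 'I_(m.+2)) : p != q -> exists v,
  (@drun _ (W m.+2) p v == ord_max) != (@drun _ (W m.+2) q v == ord_max).
Proof.
wlog : p q / (p != ord0) && (p != ord_max) || (p == ord_max).
  move=> Wl npq.
  case: (p =P ord_max) => [ep|np]; first by apply: Wl => //; rewrite ep eqxx orbT.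
  case: (p =P ord0) => [ep|np0]; last by apply: Wl => //; apply/orP; left; apply/andP; split; apply/eqP.
  case: (q =P ord_max) => [eq|nq]; first by case: (Wl q p); [rewrite eq eqxx orbT|rewrite eq_sym|move=> v h; exists v; rewrite eq_sym].
  have hq : (q != ord0) && (q != ord_max).
    apply/andP; split; apply/eqP => e; [by move: npq; rewrite ep e eqxx|exact: nq e].
  case: (Wl q p); [by rewrite hq|by rewrite eq_sym|].
  by move=> v h; exists v; rewrite eq_sym.
case/orP => [/andP[hp0 hpm]|/eqP ->] npq; last first.
  by exists [::]; move: npq; rewrite /drun /= -!val_eqE /= eqxx eq_sym; case: (val q == m.+1).
case: (q =P ord_max) => [eqm|nqm].
  exists [::]; rewrite /drun /= eqm eqxx; move: hpm; rewrite -!val_eqE /=; by case: (val p == m.+1).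
pose f : {ffun 'I_(m.+2) -> 'I_(m.+2)} := [ffun x => if x == p then ord_max else x].
have : f \in trans_semigroup (W m.+2).
  rewrite semi_fam; apply/forallP => x; rewrite /Fam !ffunE.
  have e0 : (ord0 == p) = false by rewrite eq_sym; apply: negbTE.
  have e1 : (ord_max == p) = false by rewrite eq_sym; apply: negbTE.
  rewrite e0 eqxx.
  case: ifP => [/eqP ->|_]; first by rewrite (negbTE hp0) (negbTE hpm) inE.
  case: ifP => [/eqP ->|_]; first by rewrite inE.
  by case: ifP => [/eqP ->|_]; rewrite inE.
have nqp : (q == p) = false by rewrite eq_sym; apply: negbTE.
case/semi_word => v h; exists v; rewrite -!h !ffunE eqxx nqp eqxx /=.
by move/eqP/negbTE: nqm => ->.
Qed.



Lemma drun_catE (S : Type) (A : dfa S) q u v : @drun S A q (u ++ v) = drun (drun q u) v.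
Proof. by rewrite /drun foldl_cat. Qed.

Lemma minimal_W m : minimal (W m.+2).
Proof.
move=> B hB.
pose r (q : 'I_(m.+2)) := xchoose (reach_ex q).
pose g (q : 'I_(m.+2)) := drun (dinit B) (r q).
have inj : injective g.
  move=> p q e; apply/eqP; apply: contraT => npq.
  case: (dist_ex npq) => v hv.
  have hp := xchooseP (reach_ex p); have hq := xchooseP (reach_ex q).
  have : accepts B (r p ++ v) = accepts B (r q ++ v).
    by rewrite /accepts (drun_catE (dinit B) (r p) v) (drun_catE (dinit B) (r q) v) -/(g p) -/(g q) e.
  rewrite !hB /accepts !drun_catE (eqP hp) (eqP hq) !inE => e'.
  by move: hv; rewrite e' eqxx.
by have := leq_card g inj; rewrite !card_ord.
Qed.

Lemma drn_top m w : drn m w m.+1 = m.+1.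
Proof. by elim/last_ind: w => [//|w l IH]; rewrite drn_rcons IH act_top. Qed.

Lemma all_top m (x : seq 'I_(W_letters m.+2)) :
  @drun _ (W m.+2) ord0 x = ord_max -> forall q, @drun _ (W m.+2) q x = ord_max.
Proof.
move=> h q; apply: val_inj; rewrite drun_val /=.
have h0 : drn m (map val x) 0 = m.+1 by rewrite -(drun_val ord0) h.
have [_ [[e _]|[[p [hp [e _]]]|h3]]] := inS_drn m (map val x).
- by rewrite h0 in e.
- by rewrite h0 in e; lia.
- exact: h3.
Qed.

Lemma ideal_W m : two_sided_ideal (accepts (W m.+2)).
Proof.
split.
  pose f : {ffun 'I_(m.+2) -> 'I_(m.+2)} := [ffun _ => ord_max].
  have : f \in trans_semigroup (W m.+2).
    rewrite semi_fam; apply/forallP => x; rewrite /Fam !ffunE.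
    by repeat case: ifP => _; rewrite ?inE ?eqxx.
  case/semi_word => w h; exists w; by rewrite /accepts -h ffunE inE.
move=> w; split.
  by move=> hw; exists [::], w, [::]; rewrite cats0.
case=> u [x [v [-> hx]]].
move: hx; rewrite /accepts /= !inE => /eqP hx.
rewrite !drun_catE (all_top hx).
apply/eqP; apply: val_inj; by rewrite drun_val /= drn_top.
Qed.

Theorem lemma6 (n : nat) (hn : 2 <= n) :
  minimal (W n) /\
  two_sided_ideal (accepts (W n)) /\
  #|trans_semigroup (W n)| = n ^ (n - 2) + (n - 2) * 2 ^ (n - 2) + 1.
Proof.
case: n hn => [|[|m]] // _.
split; first exact: minimal_W.
split; first exact: ideal_W.
by rewrite card_semi !subSS subn0.
Qed.
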